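(* Let $P\subset\mathbb{R}^d$ be a finite point set satisfying the standing condition, let $\varepsilon\in(0,1)$, and let $Q_\varepsilon$ be the set returned by the algorithm H-GRMR described in the context on input $P$, its extreme point set $X$, its inner-product Delaunay graph $\mathcal{G}(P)$, and $\varepsilon$. Then $Q_\varepsilon$ is an $\varepsilon$-regret set of $P$, i.e., $l(Q_\varepsilon)\le\varepsilon$.
   Context: For finite $Q\subset\mathbb{R}^d$ and unit $x$, $\omega(x,Q)=\max_{p\in Q}\langle p,x\rangle$. Standing condition: $\omega(x,P)>0$ for all $x\in\mathbb{S}^{d-1}$. Regret ratio $l_x(Q)=1-\omega(x,Q)/\omega(x,P)$; $l(Q)=\max_{x\in\mathbb{S}^{d-1}}l_x(Q)$; $Q\subseteq P$ is an $\varepsilon$-regret set if $l(Q)\le\varepsilon$. Voronoi cell $R(p)=\{x\ne0:\langle p,x\rangle\ge\omega(x,P)\}$; extreme points $X=\{t_1,\dots,t_m\}$ are the points with $R(p)\ne\varnothing$. The inner-product Delaunay graph $\mathcal{G}(P)$ is the undirected graph on $X$ with an edge $\{t_i,t_j\}$ iff $R(t_i)\cap R(t_j)\ne\varnothing$; $N(t)$ denotes the neighbors of $t$. For $t_i,t_j\in X$, $\varepsilon_{ij}$ is the optimal value of the linear program: maximize $1-\langle t_i,x\rangle$ over $x\in\mathbb{R}^d$ subject to $\langle t_j-t,x\rangle\ge0$ for all $t\in N(t_j)$ and $\langle t_j,x\rangle=1$ (with $\varepsilon_{ij}=+\infty$ if unbounded). Algorithm H-GRMR: Step 1: start with a directed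 graph $H_\varepsilon$ on $X$ with no edges; for each $t_i$, mark $t_i$ visited, enqueue all of $N(t_i)$, and while the queue is nonempty dequeue $t_j$; if $t_j$ is not visited, mark it visited, compute $\varepsilon_{ij}$, and if $\varepsilon_{ij}\le\varepsilon$ add edge $t_i\to t_j$ to $H_\varepsilon$ and enqueue all of $N(t_j)$ (visited marks are reset for each $t_i$). Step 2: let $Dom(t_i)=\{t_i\}\cup\{t_j: t_i\to t_j \text{ in } H_\varepsilon\}$; set $Q_\varepsilon=\varnothing$, $U=X$; while $U\ne\varnothing$, pick $t^*\in X\setminus Q_\varepsilon$ maximizing $|Dom(t^* )\cap U|$, add $t^*$ to $Q_\varepsilon$ and remove $Dom(t^* )$ from $U$. Return $Q_\varepsilon$. *)

(* Defs.v *)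
From HB Require Import structures.
From mathcomp Require Import all_boot all_order all_algebra.
From mathcomp Require Import boolp classical_sets reals constructive_ereal ereal.
Set Implicit Arguments. Unset Strict Implicit. Unset Printing Implicit Defensive.
Import Order.TTheory GRing.Theory Num.Theory.
Local Open Scope ring_scope.
Local Open Scope classical_set_scope.

Section RegretDefs.
Variables (R : realType) (d : nat).
Notation V := 'rV[R]_d.

Definition ip (p x : V) : R := \sum_(i < d) p ord0 i * x ord0 i.

Definition unit_sphere : set V := [set x | ip x x = 1].

(* omega(x,Q) = max_{p in Q} <p,x>  (Q finite, given as a seq; for the
   empty sequence the value is the default <0,x> = 0, never used) *)
Definition omega (x : V) (Q : seq V) : R :=
  \big[Num.max/ip (head 0 Q) x]_(p <- Q) ip p x.

Definition standing (P : seq V) : Prop :=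
  forall x, unit_sphere x -> 0 < omega x P.

Definition lx (P Q : seq V) (x : V) : R := 1 - omega x Q / omega x P.
Definition lQ (P Q : seq V) : R := sup [set lx P Q x | x in unit_sphere].

Definition eps_regret_set (P Q : seq V) (eps : R) : Prop :=
  {subset Q <= P} /\ lQ P Q <= eps.

Definition vcell (P : seq V) (p : V) : set V :=
  [set x | x != 0 /\ omega x P <= ip p x].

Definition extreme (P : seq V) : seq V :=
  [seq p <- P | asbool (vcell P p !=set0)].

Definition dedge (P : seq V) (t t' : V) : bool :=
  (t != t') && asbool (vcell P t `&` vcell P t' !=set0).

Definition nbrs (P : seq V) (t : V) : seq V :=
  [seq t' <- extreme P | dedge P t t'].

(* eps_ij : optimal value of the LP (sup of an empty feasible set is -oo,
   unbounded gives +oo) *)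
Definition eps_ij (P : seq V) (ti tj : V) : \bar R :=
  ereal_sup [set ((1 - ip ti x)%:E) | x in
     [set x : V | (forall t, t \in nbrs P tj -> 0 <= ip (tj - t) x)
                  /\ ip tj x = 1]].

(* Step 1: BFS from t_i (visited, queue), collecting out-neighbours in H_eps.
   [fuel] only ensures structural termination. *)
Fixpoint bfs (P : seq V) (eps : R) (ti : V) (fuel : nat)
  (visited queue out : seq V) : seq V :=
  match fuel with
  | 0%N => out
  | S f =>
    match queue with
    | [::] => out
    | tj :: q =>
      if tj \in visited then bfs P eps ti f visited q out
      else if asbool (eps_ij P ti tj <= eps%:E)%E
           then bfs P eps ti f (tj :: visited) (q ++ nbrs P tj) (tj :: out)
           else bfs P eps ti f (tj :: visited) q out
    end
  end.

(* fuel bound: at most |X| vertices get visited, each enqueues <= |X| items *)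
Definition bfs_fuel (P : seq V) : nat := ((size (extreme P)).+1 ^ 2)%N.

Definition Hout (P : seq V) (eps : R) (ti : V) : seq V :=
  bfs P eps ti (bfs_fuel P) [:: ti] (nbrs P ti) [::].

Definition Dom (P : seq V) (eps : R) (ti : V) : seq V := ti :: Hout P eps ti.

Definition covers (P : seq V) (eps : R) (t : V) (U : seq V) : nat :=
  size [seq u <- U | u \in Dom P eps t].

(* Step 2: greedy selection, with arbitrary tie-breaking.
   greedy P eps U Q Qf : starting from state (U, Q_eps = Q), the loop can
   terminate returning Qf. *)
Inductive greedy (P : seq V) (eps : R) : seq V -> seq V -> seq V -> Prop :=
| greedy_done Q : greedy P eps [::] Q Q
| greedy_step U Q Qf t :
    U != [::] ->
    t \in extreme P -> t \notin Q ->
    (forall t', t' \in extreme P -> t' \notin Q ->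
       (covers P eps t' U <= covers P eps t U)%N) ->
    greedy P eps [seq u <- U | u \notin Dom P eps t] (t :: Q) Qf ->
    greedy P eps U Q Qf.

Definition HGRMR_output (P : seq V) (eps : R) (Q : seq V) : Prop :=
  greedy P eps (extreme P) [::] Q.

End RegretDefs.

(* Main.v *)
Require Import Defs.
From HB Require Import structures.
From mathcomp Require Import all_boot all_order all_algebra.
From mathcomp Require Import boolp classical_sets reals constructive_ereal ereal.
Import Order.TTheory GRing.Theory Num.Theory.
Local Open Scope ring_scope.

Set Implicit Arguments.
Section Helpers.
Context {R : realType} {d : nat}.
Notation V := 'rV[R]_d.

Lemma big_max_ge (s : seq V) (F : V -> R) (i : R) p :
  p \in s -> F p <= \big[Num.max/i]_(q <- s) F q.
Proof.
elim: s => [//|a s IH]; rewrite in_cons big_cons => /orP [/eqP->|H].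
  by rewrite le_max lexx.
by rewrite le_max IH ?orbT.
Qed.

Lemma big_max_attained (s : seq V) (F : V -> R) (i : R) :
  \big[Num.max/i]_(q <- s) F q = i \/
  exists2 p, p \in s & \big[Num.max/i]_(q <- s) F q = F p.
Proof.
elim: s => [|a s IH]; first by left; rewrite big_nil.
rewrite big_cons; case: IH => [->|[p ps ->]].
  case: (leP i (F a)) => H.
    by right; exists a; rewrite ?mem_head.
  by left.
case: (leP (F p) (F a)) => H.
  by right; exists a; rewrite ?mem_head.
by right; exists p; rewrite ?in_cons ?ps ?orbT.
Qed.

Lemma omega_ge x (Q : seq V) p : p \in Q -> ip p x <= omega x Q.
Proof.
rewrite /omega; move: (ip (head 0 Q) x) => i; elim: Q => [//|a s IH].
rewrite in_cons big_cons => /orP [/eqP->|H].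
  by rewrite le_max lexx.
by rewrite le_max IH ?orbT.
Qed.

Lemma omega_attained x (P : seq V) : P != [::] ->
  exists2 p, p \in P & omega x P = ip p x.
Proof.
move=> nP; rewrite /omega; case: (big_max_attained P (fun q => ip q x) (ip (head 0 P) x)).
  by move=> ->; exists (head 0 P) => //; case: P nP => //= a s _; rewrite mem_head.
by [].
Qed.

Lemma ipZ (p x : V) (c : R) : ip p (c *: x) = c * ip p x.
Proof.
rewrite /ip big_distrr /=; apply: eq_bigr => i _; rewrite mxE.
by rewrite mulrCA.
Qed.

Lemma ipB (p q x : V) : ip (p - q) x = ip p x - ip q x.
Proof.
rewrite /ip -sumrB; apply: eq_bigr => i _; rewrite !mxE; by rewrite mulrBl.
Qed.

Lemma ip00 : ip (0 : V) 0 = 0.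
Proof. by rewrite /ip big1 // => i _; rewrite mxE mul0r. Qed.

Lemma bfs_inv (P : seq V) eps ti fuel visited queue out y :
  y \in bfs P eps ti fuel visited queue out ->
  y \in out \/ (eps_ij P ti y <= eps%:E)%E.
Proof.
elim: fuel visited queue out => [|f IH] visited queue out /=; first by left.
case: queue => [|tj q]; first by left.
case: ifP => _; first by apply: IH.
case: ifP => [/asboolP He|_] /IH [].
- rewrite in_cons => /orP [/eqP->|]; by [right|left].
- by right.
- by left.
- by right.
Qed.

Lemma greedy_inv (P : seq V) eps U Q Qf : greedy P eps U Q Qf ->
  (forall u, u \in U -> exists2 t, t \in Qf & u \in Dom P eps t) /\
  (forall t, t \in Qf -> t \in Q \/ t \in extreme P) /\ {subset Q <= Qf}.
Proof.
elim=> {U Q Qf} [Q|U Q Qf t _ tX tQ _ _ [IH1 [IH2 IH3]]].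
  by split=> //; split=> // t tQ; left.
split; last split.
- move=> u uU; case Hu: (u \in Dom P eps t).
    by exists t => //; apply: IH3; rewrite mem_head.
  by apply: IH1; rewrite mem_filter Hu.
- move=> s /IH2 [|]; last by right.
  by rewrite in_cons => /orP [/eqP->|]; [right|left].
- by move=> s sQ; apply: IH3; rewrite in_cons sQ orbT.
Qed.

End Helpers.

Theorem theorem4 (R : realType) (d : nat) (P : seq 'rV[R]_d) (eps : R) :
  uniq P -> standing P -> 0 < eps < 1 ->
  forall Q : seq 'rV[R]_d, HGRMR_output P eps Q -> eps_regret_set P Q eps.
Proof.
move=> _ Hst /andP [e0 e1] Q /greedy_inv [Hcov [HQ _]].
have QP : {subset Q <= P}.
  by move=> t /HQ [//|]; rewrite mem_filter => /andP [].
split=> //.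
have key : forall x, unit_sphere x -> lx P Q x <= eps.
  move=> x xS.
  have oP := Hst x xS.
  have nP : P != [::].
    apply/eqP => P0; move: oP; rewrite P0 /omega big_nil /=.
    by rewrite /ip big1 ?ltxx // => i _; rewrite mxE mul0r.
  have x0 : x != 0.
    by apply/eqP => x0; move: xS; rewrite /unit_sphere /= x0 ip00 => /eqP; rewrite eq_sym oner_eq0.
  have [t tP ot] := (@omega_attained _ _ x P nP).
  have tX : t \in extreme P.
    rewrite mem_filter tP andbT; apply/asboolP; exists x; split => //.
    by rewrite ot.
  have [ts tsQ tD] := Hcov t tX.
  rewrite /lx.
  have tpos : 0 < ip t x by rewrite -ot.
  suff : (1 - eps) * ip t x <= omega x Q.
    move=> H; rewrite ot lerBlDr -lerBlDl ler_pdivlMr //.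
  move: tD; rewrite /Dom in_cons => /orP [/eqP tE|].
    rewrite -tE in tsQ; apply: le_trans (omega_ge x _ _ tsQ).
    by rewrite ler_piMl ?(ltW tpos) // lerBlDr lerDl ltW.
  move/bfs_inv => [//|He].
  set x' := (ip t x)^-1 *: x.
  have : ((1 - ip ts x')%:E <= eps%:E)%E.
    apply: le_trans He; apply: ereal_sup_ubound; exists x' => //; split.
      move=> t' t'N; rewrite ipZ ipB mulr_ge0 ?invr_ge0 ?(ltW tpos) // subr_ge0.
      rewrite -ot; apply: omega_ge.
      by move: t'N; rewrite mem_filter => /andP [_]; rewrite mem_filter => /andP [].
    by rewrite ipZ mulVf // gt_eqF.
  rewrite lee_fin ipZ => H.
  apply: le_trans (omega_ge x _ _ tsQ).
  have H2 : 1 - eps <= (ip t x)^-1 * ip ts x by rewrite lerBlDr addrC -lerBlDr.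
  by rewrite -ler_pdivlMr // mulrC.
rewrite /lQ; set S := (X in sup X); case: (pselect (S !=set0)%classic) => [ne|/set0P/negP/negbNE/eqP E0].
  apply: ge_sup => //.
  by move=> z [x xS <-]; apply: key.
by rewrite E0 sup0 ltW.
Qed.
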